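(* Let $\rho$ be a state of $A$ and $\sigma$ a state of $B$, and let $\mathcal{H}_S:=\mathrm{supp}\,\mathcal{G}(\sigma)\subseteq\mathcal{H}_B$, regarded as a system $S$ carrying the restriction of $U_B$ (this subspace is invariant under every $U_B(g)$). Then there exists a $G$-covariant channel from $A$ to $B$ mapping $\rho$ to $\sigma$ if and only if there exists a $G$-covariant channel from $A$ to $S$ mapping $\rho$ to $\sigma$.
   Context: $G$ is a compact group with normalized Haar measure $dg$; finite-dimensional systems $A,B$ carry continuous unitary representations $U_A,U_B$. $\mathcal{G}(\sigma)=\int dg\,U_B(g)\sigma U_B(g)^\dagger$. A channel $\mathcal{E}$ from $X$ to $Y$ is $G$-covariant if $\mathcal{E}(U_X(g)MU_X(g)^\dagger)=U_Y(g)\mathcal{E}(M)U_Y(g)^\dagger$ for all $g$ and $M$. *)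

(* Defs.v *)
From HB Require Import structures.
From mathcomp Require Import all_boot all_order all_algebra.
From mathcomp Require Import sesquilinear spectral.
From mathcomp Require Import complex.
From mathcomp Require Import all_classical all_reals.
From mathcomp Require Import topology normedtype measure lebesgue_integral probability.

Set Implicit Arguments.
Unset Strict Implicit.
Unset Printing Implicit Defensive.

Import Order.TTheory GRing.Theory Num.Theory.
Import numFieldNormedType.Exports.
Local Open Scope classical_set_scope.
Local Open Scope ring_scope.
Local Open Scope complex_scope.

Record CompactGroup (R : realType) := {
  cgT :> ptopologicalType;
  cg_mul : cgT -> cgT -> cgT;
  cg_inv : cgT -> cgT;
  cg_one : cgT;
  cg_mulA : forall x y z, cg_mul x (cg_mul y z) = cg_mul (cg_mul x y) z;
  cg_mul1g : forall x, cg_mul cg_one x = x;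
  cg_mulVg : forall x, cg_mul (cg_inv x) x = cg_one;
  cg_mul_cont : continuous (fun p : cgT * cgT => cg_mul p.1 p.2);
  cg_inv_cont : continuous cg_inv;
  cg_hausdorff : hausdorff_space cgT;
  cg_compact : compact [set: cgT];
  cg_haar : probability (g_sigma_algebraType (@open cgT)) R;
  cg_haar_invariant : forall (g : cgT) (A : set (g_sigma_algebraType (@open cgT))),
      measurable A -> cg_haar (cg_mul g @` A) = cg_haar A
}.

Definition adj (R : realType) m n (M : 'M[R[i]]_(m, n)) : 'M[R[i]]_(n, m) :=
  (M ^t*)%sesqui.

Record URep (R : realType) (G : CompactGroup R) (n : nat) := {
  rep :> G -> 'M[R[i]]_n;
  rep_unitary : forall g, rep g *m adj (rep g) = 1%:M;
  rep_morph : forall g h : G, rep (@cg_mul _ G g h) = rep g *m rep h;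
  rep_one : rep (@cg_one _ G) = 1%:M;
  rep_cont_Re : forall i j, continuous (fun g : G => complex.Re (rep g i j));
  rep_cont_Im : forall i j, continuous (fun g : G => complex.Im (rep g i j))
}.

(* The G-twirl  G(s) = \int dg U(g) s U(g)^dagger (entrywise Haar integral) *)
Definition twirl (R : realType) (G : CompactGroup R) n (U : G -> 'M[R[i]]_n)
    (s : 'M[R[i]]_n) : 'M[R[i]]_n :=
  \matrix_(i, j)
    ((Rintegral (@cg_haar _ G) setT
        (fun g : g_sigma_algebraType (@open G) =>
           complex.Re ((U g *m s *m adj (U g)) i j)))
     +i*
     (Rintegral (@cg_haar _ G) setT
        (fun g : g_sigma_algebraType (@open G) =>
           complex.Im ((U g *m s *m adj (U g)) i j)))).

Definition psdmx (R : realType) n (M : 'M[R[i]]_n) :=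
  forall v : 'cV[R[i]]_n, 0 <= (adj v *m M *m v) 0 0.

Definition is_state (R : realType) n (M : 'M[R[i]]_n) :=
  psdmx M /\ \tr M = 1.

(* k x k block matrix with m x m blocks is PSD *)
Definition block_psd (R : realType) m k (X : 'I_k -> 'I_k -> 'M[R[i]]_m) :=
  forall v : 'I_k -> 'cV[R[i]]_m,
    0 <= \sum_(a < k) \sum_(b < k) (adj (v a) *m X a b *m v b) 0 0.

(* complete positivity: id_k (x) Phi is positive for every k *)
Definition completely_positive (R : realType) m n
    (Phi : 'M[R[i]]_m -> 'M[R[i]]_n) :=
  forall k (X : 'I_k -> 'I_k -> 'M[R[i]]_m),
    block_psd X -> block_psd (fun a b => Phi (X a b)).

Definition trace_preserving (R : realType) m n
    (Phi : 'M[R[i]]_m -> 'M[R[i]]_n) := forall M, \tr (Phi M) = \tr M.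

Definition channel (R : realType) m n (Phi : 'M[R[i]]_m -> 'M[R[i]]_n) :=
  linear Phi /\ completely_positive Phi /\ trace_preserving Phi.

Definition covariant (R : realType) (G : CompactGroup R) m n
    (UX : G -> 'M[R[i]]_m) (UY : G -> 'M[R[i]]_n)
    (Phi : 'M[R[i]]_m -> 'M[R[i]]_n) :=
  forall (g : G) (M : 'M[R[i]]_m),
    Phi (UX g *m M *m adj (UX g)) = UY g *m Phi M *m adj (UY g).

(* Main.v *)
Require Import Defs.
From HB Require Import structures.
From mathcomp Require Import all_boot all_order all_algebra.
From mathcomp Require Import sesquilinear spectral.
From mathcomp Require Import complex.
From mathcomp Require Import all_classical all_reals.
From mathcomp Require Import topology normedtype measure lebesgue_integral probability.
From mathcomp Require Import lebesgue_stieltjes_measure lebesgue_measure measurable_realfun.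
From mathcomp Require Import ring lra.
Import Order.TTheory GRing.Theory Num.Theory.
Local Open Scope ring_scope.
Module PAn.
Import Order.TTheory GRing.Theory Num.Theory.
Import numFieldNormedType.Exports.
Local Open Scope classical_set_scope.
Local Open Scope ring_scope.

Section An.
Context {R : realType} {G : CompactGroup R}.
Local Notation T := (g_sigma_algebraType (@open (cgT G))).
Local Notation mu := (cg_haar G).

Lemma measT : @measurable _ T = <<s @open (cgT G) >>.
Proof. by []. Qed.

Lemma cont_meas (f : cgT G -> R) : continuous f -> measurable_fun [set: T] (f : T -> R).
Proof.
move=> /continuousP cf; apply: (measurability _ (RGenOpens.measurableE R)).
move=> _ [_ [a [b ->] <-]]; rewrite setTI; apply: sub_sigma_algebra.
apply: cf; exact: interval_open.
Qed.

Lemma cont_meas_T (f : cgT G -> cgT G) : continuous f -> measurable_fun [set: T] (f : T -> T).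
Proof.
move=> /continuousP cf; apply: (measurability _ measT).
move=> _ [B oB <-]; rewrite setTI; apply: sub_sigma_algebra.
exact: cf.
Qed.

Lemma cont_int (f : cgT G -> R) : continuous f -> mu.-integrable [set: T] (EFin \o (f : T -> R)).
Proof.
move=> cf; apply: measurable_bounded_integrable => //.
- by apply: (le_lt_trans (probability_le1 mu _)) => //; rewrite ltry.
- exact: cont_meas.
- have : compact (f @` [set: cgT G]).
    apply: continuous_compact; last exact: cg_compact.
    by apply: continuous_subspaceT.
  move=> /compact_bounded [M [Mr HM]]; exists M; split => // x Mx y _.
  by apply: (HM x Mx); exists y.
Qed.
End An.

Section An2.
Context {R : realType} {G : CompactGroup R}.
Local Notation T := (g_sigma_algebraType (@open (cgT G))).
Local Notation mu := (cg_haar G).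

Lemma cg_mulgV (x : cgT G) : cg_mul x (cg_inv x) = cg_one G.
Proof.
have e : cg_mul x (cg_inv x) = cg_mul (cg_inv (cg_inv x)) (cg_mul (cg_inv x) (cg_mul x (cg_inv x))).
  by rewrite cg_mulA cg_mulVg cg_mul1g.
by rewrite e (cg_mulA _ x) cg_mulVg cg_mul1g cg_mulVg.
Qed.

Lemma cg_mulg1 (x : cgT G) : cg_mul x (cg_one G) = x.
Proof. by rewrite -(cg_mulVg x) cg_mulA cg_mulgV cg_mul1g. Qed.

Lemma lmul_cont (h : cgT G) : continuous (fun x : cgT G => cg_mul h x).
Proof.
move=> x.
apply: (@continuous_comp _ _ _ (fun y : cgT G => (h, y)) (fun p : cgT G * cgT G => cg_mul p.1 p.2)).
  apply: cvg_pair => //. all: try exact: cvg_cst. all: try exact: cvg_id. idtac.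
exact: cg_mul_cont.
Qed.

Lemma comp_cont (f : cgT G -> R) (h : cgT G) : continuous f -> continuous (fun x => f (cg_mul h x)).
Proof.
move=> cf x; apply: (@continuous_comp _ _ _ (fun y : cgT G => cg_mul h y) f).
  exact: lmul_cont.
exact: cf.
Qed.

Lemma int_transl (f : cgT G -> R) (h : cgT G) : continuous f ->
  \int[mu]_(x in [set: T]) f (cg_mul h x) = \int[mu]_(x in [set: T]) f x.
Proof.
move=> cf; rewrite /Rintegral; congr fine.
have mphi := @cont_meas_T R G _ (lmul_cont h).
have mf : measurable_fun [set: T] (EFin \o (f : T -> R)).
  by apply/measurable_EFinP; exact: cont_meas.
have intf : mu.-integrable ((fun x : T => (cg_mul h x : T)) @^-1` [set: T]) ((EFin \o (f : T -> R)) \o (fun x : T => (cg_mul h x : T))).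
  rewrite preimage_setT. have H := (@cont_int R G (fun x => f (cg_mul h x)) (comp_cont f h cf)). exact: H.
have E := @integral_pushforward _ _ T T R (fun x : T => (cg_mul h x : T)) mphi mu setT (EFin \o (f : T -> R)) mf intf measurableT.
rewrite preimage_setT in E.
rewrite -E.
apply: eq_measure_integral => A mA _ /=; rewrite /pushforward.
have -> : (fun x : T => (cg_mul h x : T)) @^-1` A = [set (cg_mul (cg_inv h) a : T) | a in A].
  apply/seteqP; split => x /=.
    move=> Ax; exists (cg_mul h x) => //.
    by rewrite cg_mulA cg_mulVg cg_mul1g.
  by move=> [a Aa <-]; rewrite cg_mulA cg_mulgV cg_mul1g.
by rewrite cg_haar_invariant.
Qed.
End An2.

Section An3.
Context {R : realType} {G : CompactGroup R}.
Local Notation T := (g_sigma_algebraType (@open (cgT G))).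
Local Notation mu := (cg_haar G).

Lemma null_transl (f : cgT G -> R) (c : R) (h : cgT G) : continuous f -> (forall x, 0 <= f x) ->
  \int[mu]_(x in [set: T]) f x = 0 -> 0 < c ->
  mu.-negligible [set x : T | c <= f (cg_mul h x)].
Proof.
move=> cf f0 I0 c0.
have cg := comp_cont f h cf.
have mg : measurable_fun [set: T] (EFin \o (fun x : T => f (cg_mul h x))).
  by apply/measurable_EFinP; exact: cont_meas.
have ig := cont_int _ cg.
have mN := emeasurable_fun_c_infty measurableT mg c%:E.
exists ([set: T] `&` [set x | (c%:E <= (EFin \o (fun x : T => f (cg_mul h x))) x)%E]); split => //; last first.
have H := le_integral_abse mu measurableT mg c0.
have E : (\int[mu]_(x in [set: T]) `|(EFin \o (fun x : T => f (cg_mul h x))) x|)%E = 0%E.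
  under eq_integral => x _ do rewrite /comp abse_EFin ger0_norm ?f0 //.
  rewrite -(fineK (integrable_fin_num measurableT ig)).
  have := int_transl f h cf; rewrite /Rintegral => ->.
  by rewrite -/(Rintegral _ _ _) I0.
rewrite E in H.
have : ([set: T] `&` [set x | (c%:E <= `|(EFin \o (fun x : T => f (cg_mul h x))) x|)%E]) =
       ([set: T] `&` [set x | (c%:E <= (EFin \o (fun x : T => f (cg_mul h x))) x)%E]).
  by apply/seteqP; split => x /=; rewrite ger0_norm ?f0.
move=> E2; rewrite E2 pmule_rle0 ?lte_fin // in H.
by apply/eqP; rewrite eq_le H measure_ge0.
Qed.

Lemma int0_pt0 (f : cgT G -> R) : continuous f -> (forall x, 0 <= f x) ->
  \int[mu]_(x in [set: T]) f x = 0 -> forall x, f x = 0.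
Proof.
move=> cf f0 I0 x0; apply/eqP; rewrite eq_le f0 andbT; apply/negP => /negP.
rewrite -ltNge => fpos.
pose c := f x0 / 2.
have c0 : 0 < c by rewrite divr_gt0.
have cx0 : c < f x0 by rewrite /c ltr_pdivrMr // ltr_pMr // ltr1n.
pose O := fun h : cgT G => [set x : cgT G | c < f (cg_mul h x)].
have oO : forall h, setT h -> open (O h).
  move=> h _; have := comp_cont f h cf => /continuousP /(_ _ (@open_gt _ c)).
  by [].
have cov : [set: cgT G] `<=` cover setT O.
  move=> x _; exists (cg_mul x0 (cg_inv x)) => //.
  by rewrite /O /= -cg_mulA cg_mulVg cg_mulg1.
have := @cg_compact _ G; rewrite compact_cover => /(_ _ setT O oO cov) [D' _ sD'].
have negT : mu.-negligible [set: T].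
  have NA : mu.-negligible (\bigcup_k [set x : T | c <= f (cg_mul (nth x0 (finmap.enum_fset D') k) x)]).
    by apply: negligible_bigcup => k; exact: null_transl.
  apply: (negligibleS _ NA).
  move=> x _; have [i iD' Oi] := sD' x I.
  exists (index i (finmap.enum_fset D')) => //=.
  rewrite nth_index //; exact: ltW.
move: negT => [A [mA A0 TA]].
have : A = [set: T] by apply/seteqP; split.
move=> EA; move: A0; rewrite EA probability_setT => /eqP.
by rewrite onee_eq0.
Qed.
End An3.

End PAn.
Import PAn.

Module PCI.
Import Order.TTheory GRing.Theory Num.Theory.
Import numFieldNormedType.Exports.
Local Open Scope classical_set_scope.
Local Open Scope ring_scope.

Section Cx.
Context {R : realType}.
Implicit Types x y : R[i].
Lemma ReD x y : complex.Re (x + y) = complex.Re x + complex.Re y.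
Proof. by case: x => a b; case: y. Qed.
Lemma ImD x y : complex.Im (x + y) = complex.Im x + complex.Im y.
Proof. by case: x => a b; case: y. Qed.
Lemma ReM x y : complex.Re (x * y) = complex.Re x * complex.Re y - complex.Im x * complex.Im y.
Proof. by case: x => a b; case: y. Qed.
Lemma ImM x y : complex.Im (x * y) = complex.Re x * complex.Im y + complex.Im x * complex.Re y.
Proof. by case: x => a b; case: y. Qed.
Lemma ReJ x : complex.Re (x^*) = complex.Re x.
Proof. by case: x. Qed.
Lemma ImJ x : complex.Im (x^*) = - complex.Im x.
Proof. by case: x. Qed.
Lemma Re0 : complex.Re (0 : R[i]) = 0. Proof. by []. Qed.
Lemma Im0 : complex.Im (0 : R[i]) = 0. Proof. by []. Qed.
End Cx.

Section CI.
Context {R : realType} {G : CompactGroup R}.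
Local Notation T := (g_sigma_algebraType (@open (cgT G))).
Local Notation mu := (cg_haar G).

Lemma rc_add (f g : cgT G -> R) : continuous f -> continuous g -> continuous (fun x => f x + g x).
Proof. move=> cf cg x. have := @continuousD R R^o _ f g x (cf x) (cg x). exact. Qed.
Lemma rc_mul (f g : cgT G -> R) : continuous f -> continuous g -> continuous (fun x => f x * g x).
Proof. move=> cf cg x. have := @continuousM R _ f g x (cf x) (cg x). exact. Qed.
Lemma rc_opp (f : cgT G -> R) : continuous f -> continuous (fun x => - f x).
Proof. move=> cf x. have := @continuousN R R^o _ f x (cf x). exact. Qed.
Lemma rc_cst (c : R) : continuous (fun _ : cgT G => c).
Proof. by move=> x; exact: cvg_cst. Qed.

Definition ccont (F : cgT G -> R[i]) :=
  continuous (fun g => complex.Re (F g)) /\ continuous (fun g => complex.Im (F g)).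

Lemma cc_add F1 F2 : ccont F1 -> ccont F2 -> ccont (fun g => F1 g + F2 g).
Proof.
move=> [r1 i1] [r2 i2]; split.
  by under eq_fun do rewrite ReD; exact: rc_add.
by under eq_fun do rewrite ImD; exact: rc_add.
Qed.
Lemma cc_mul F1 F2 : ccont F1 -> ccont F2 -> ccont (fun g => F1 g * F2 g).
Proof.
move=> [r1 i1] [r2 i2]; split.
  by under eq_fun do rewrite ReM; apply: rc_add; [apply: rc_mul | apply/rc_opp/rc_mul].
by under eq_fun do rewrite ImM; apply: rc_add; apply: rc_mul.
Qed.
Lemma cc_conj F : ccont F -> ccont (fun g => (F g)^*).
Proof.
move=> [r i]; split; first by under eq_fun do rewrite ReJ.
by under eq_fun do rewrite ImJ; exact: rc_opp.
Qed.
Lemma cc_cst c : ccont (fun _ => c).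
Proof. by split; exact: rc_cst. Qed.

Lemma cc_sum n (F : 'I_n -> cgT G -> R[i]) : (forall k, ccont (F k)) ->
  ccont (fun g => \sum_(k < n) F k g).
Proof.
move=> cF; elim: n F cF => [|n IH] F cF.
  by under eq_fun do rewrite big_ord0; exact: cc_cst.
under eq_fun do rewrite big_ord_recr /=.
apply: cc_add; last exact: cF.
exact: (IH (fun k => F (widen_ord (leqnSn n) k))).
Qed.

Definition CI (F : cgT G -> R[i]) : R[i] :=
  complex.Complex (\int[mu]_(x in [set: T]) complex.Re (F x)) (\int[mu]_(x in [set: T]) complex.Im (F x)).

Lemma CI_add F1 F2 : ccont F1 -> ccont F2 -> CI (fun g => F1 g + F2 g) = CI F1 + CI F2.
Proof.
move=> [r1 i1] [r2 i2]; rewrite /CI.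
under eq_Rintegral do rewrite ReD.
under [X in complex.Complex _ X]eq_Rintegral do rewrite ImD.
rewrite !RintegralD //; try exact: cont_int.
Qed.

Lemma CI_scale c F : ccont F -> CI (fun g => c * F g) = c * CI F.
Proof.
move=> [r i]; rewrite /CI.
under eq_Rintegral do rewrite ReM -mulNr.
under [X in complex.Complex _ X]eq_Rintegral do rewrite ImM.
rewrite !RintegralD //; try (apply: cont_int; apply: rc_mul => //; exact: rc_cst).
rewrite !RintegralZl //; try exact: cont_int.
case: c => a b /=.
by rewrite mulNr.
Qed.

Lemma CI_cst0 : CI (fun _ => 0) = 0.
Proof. by rewrite /CI /= Rintegral_cst // mul0r. Qed.

Lemma CI_sum n (F : 'I_n -> cgT G -> R[i]) : (forall k, ccont (F k)) ->
  CI (fun g => \sum_(k < n) F k g) = \sum_(k < n) CI (F k).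
Proof.
move=> cF; elim: n F cF => [|n IH] F cF.
  by under eq_fun do rewrite big_ord0; rewrite big_ord0 CI_cst0.
under eq_fun do rewrite big_ord_recr /=.
rewrite CI_add; last exact: cF.
  by rewrite (IH (fun k => F (widen_ord (leqnSn n) k))) // big_ord_recr.
have H := cc_sum _ (fun k => F (widen_ord (leqnSn n) k)) (fun k => cF _). exact: H.
Qed.

Lemma CI_transl h F : ccont F -> CI (fun g => F (cg_mul h g)) = CI F.
Proof.
move=> [r i]; rewrite /CI.
by rewrite (int_transl (fun g => complex.Re (F g))) // (int_transl (fun g => complex.Im (F g))).
Qed.

Definition mcont m n (F : cgT G -> 'M[R[i]]_(m, n)) := forall i j, ccont (fun g => F g i j).
Arguments mcont {m n}.

Lemma hadjE m n (M : 'M[R[i]]_(m, n)) i j : adj M i j = (M j i)^*.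
Proof. by rewrite /adj !mxE. Qed.

Lemma mc_mul m n p (F1 : cgT G -> 'M[R[i]]_(m, n)) (F2 : cgT G -> 'M[R[i]]_(n, p)) :
  mcont F1 -> mcont F2 -> mcont (fun g => F1 g *m F2 g).
Proof.
move=> c1 c2 i j; under eq_fun do rewrite mxE.
by apply: cc_sum => k; apply: cc_mul.
Qed.

Lemma mc_cst m n (A : 'M[R[i]]_(m, n)) : mcont (fun _ => A).
Proof. by move=> i j; exact: cc_cst. Qed.

Lemma mc_adj m n (F : cgT G -> 'M[R[i]]_(m, n)) : mcont F -> mcont (fun g => adj (F g)).
Proof. by move=> c i j; under eq_fun do rewrite hadjE; exact: cc_conj. Qed.

Lemma mc_rep n (U : URep G n) : mcont (fun g => U g).
Proof. by move=> i j; split; [exact: rep_cont_Re | exact: rep_cont_Im]. Qed.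

Definition MI m n (F : cgT G -> 'M[R[i]]_(m, n)) : 'M[R[i]]_(m, n) :=
  \matrix_(i, j) CI (fun g => F g i j).
Arguments MI {m n}.

Lemma MI_mull m n p (A : 'M[R[i]]_(m, n)) (F : cgT G -> 'M[R[i]]_(n, p)) :
  mcont F -> MI (fun g => A *m F g) = A *m MI F.
Proof.
move=> c; apply/matrixP => i j; rewrite !mxE.
under eq_fun do rewrite mxE.
rewrite CI_sum; last by move=> k; apply: cc_mul; [exact: cc_cst | exact: c].
by apply: eq_bigr => k _; rewrite CI_scale // mxE.
Qed.

Lemma MI_mulr m n p (F : cgT G -> 'M[R[i]]_(m, n)) (B : 'M[R[i]]_(n, p)) :
  mcont F -> MI (fun g => F g *m B) = MI F *m B.
Proof.
move=> c; apply/matrixP => i j; rewrite !mxE.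
under eq_fun do rewrite mxE.
under eq_fun do under eq_bigr do rewrite mulrC.
rewrite CI_sum; last by move=> k; apply: cc_mul; [exact: cc_cst | exact: c].
by apply: eq_bigr => k _; rewrite CI_scale // mxE mulrC.
Qed.

Lemma MI_transl m n h (F : cgT G -> 'M[R[i]]_(m, n)) :
  mcont F -> MI (fun g => F (cg_mul h g)) = MI F.
Proof. by move=> c; apply/matrixP => i j; rewrite !mxE (CI_transl h (fun g => F g i j)). Qed.

Lemma twirlE n (U : URep G n) s : twirl U s = MI (fun g => U g *m s *m adj (U g)).
Proof. by []. Qed.
End CI.
Arguments mcont {R G m n}.
Arguments MI {R G m n}.

End PCI.
Import PCI.

Module PAlg.
Import Order.TTheory GRing.Theory Num.Theory.
Local Open Scope ring_scope.

Section Adj.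
Context {R : realType}.
Local Notation C := R[i].

Lemma hadjM m n p (A : 'M[C]_(m, n)) (B : 'M[C]_(n, p)) : adj (A *m B) = adj B *m adj A.
Proof. by rewrite /adj trmx_mul map_mxM. Qed.
Lemma hadjK m n (A : 'M[C]_(m, n)) : adj (adj A) = A.
Proof. exact: trmxCK. Qed.
Lemma hadjD m n (A B : 'M[C]_(m, n)) : adj (A + B) = adj A + adj B.
Proof. by rewrite /adj linearD map_mxD. Qed.
Lemma hadjZ m n a (A : 'M[C]_(m, n)) : adj (a *: A) = a^* *: adj A.
Proof. by rewrite /adj linearZ map_mxZ. Qed.
Lemma hadjN m n (A : 'M[C]_(m, n)) : adj (- A) = - adj A.
Proof. by rewrite -scaleN1r hadjZ rmorphN1 scaleN1r. Qed.
Lemma hadjB m n (A B : 'M[C]_(m, n)) : adj (A - B) = adj A - adj B.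
Proof. by rewrite hadjD hadjN. Qed.
Lemma hadj0 m n : adj (0 : 'M[C]_(m, n)) = 0.
Proof. by apply/matrixP => i j; rewrite /adj !mxE rmorph0. Qed.
Lemma hadj_scalar n a : adj (a%:M : 'M[C]_n) = (a^*)%:M.
Proof. by apply/matrixP => i j; rewrite /adj !mxE eq_sym rmorphMn. Qed.
Lemma hadj1 n : adj (1%:M : 'M[C]_n) = 1%:M.
Proof. by rewrite hadj_scalar rmorph1. Qed.
Lemma hadj_delta m n (i : 'I_m) (j : 'I_n) : adj (delta_mx i j : 'M[C]_(m, n)) = delta_mx j i.
Proof.
apply/matrixP => a b; rewrite /adj !mxE.
by case: (b == i); case: (a == j); rewrite /= ?rmorph1 ?rmorph0.
Qed.
Lemma hadjE m n (M : 'M[C]_(m, n)) i j : adj M i j = (M j i)^*.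
Proof. by rewrite /adj !mxE. Qed.
End Adj.

Section Quad.
Context {R : realType}.
Local Open Scope complex_scope.
Lemma quadR (x c : R) : 0 <= c -> (forall t : R, 0 <= t * x + t ^+ 2 * c) -> x = 0.
Proof.
move=> c0 H; have := H (- x / (c + 1)).
have c1 : 0 < c + 1 by lra.
set s := (c + 1)^-1.
have s0 : 0 < s by rewrite invr_gt0.
have sc : s * (c + 1) = 1 by rewrite mulVf // gt_eqF.
rewrite mulNr expr2 => h.
have : 0 <= x * x * s * (s * c - 1) by nra.
have : s * c - 1 < 0 by nra.
move=> hn hp.
have : x * x * s <= 0 by nra.
nra.
Qed.

Lemma quadC (a b c : R[i]) : 0 <= c -> (forall z : R[i], 0 <= z * a + z^* * b + z^* * z * c) -> a = 0 /\ b = 0.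
Proof.
case: a => a1 a2; case: b => b1 b2; case: c => c1 c2.
rewrite lecE /= => /andP [/eqP c20 c10] H.
have Ht t := H (t%:C). have Hi t := H ((0 +i* t)%C).
have Rt t : 0 <= t * (a1 + b1) + t ^+ 2 * c1.
  by move: (Ht t); rewrite lecE /= expr2 c20 => /andP [_ h]; nra.
have Ri t : 0 <= t * (b2 - a2) + t ^+ 2 * c1.
  by move: (Hi t); rewrite lecE /= expr2 c20 => /andP [_ h]; nra.
have I1 : a2 + b2 = 0.
  by move: (Ht 1); rewrite lecE /= c20 => /andP [/eqP h _]; nra.
have I2 : a1 - b1 = 0.
  by move: (Hi 1); rewrite lecE /= c20 => /andP [/eqP h _]; nra.
have E1 := quadR _ _ c10 Rt.
have E2 := quadR _ _ c10 Ri.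
have -> : a1 = 0 by lra.
have -> : a2 = 0 by lra.
have -> : b1 = 0 by lra.
have -> : b2 = 0 by lra.
by [].
Qed.

End Quad.

Section Psd.
Context {R : realType}.
Local Notation C := R[i].

Lemma quad_expand n (M : 'M[C]_n) (v u : 'cV[C]_n) (z : C) :
  (adj (v + z *: u) *m M *m (v + z *: u)) 0 0 =
  (adj v *m M *m v) 0 0 + z * (adj v *m M *m u) 0 0 + z^* * (adj u *m M *m v) 0 0
  + z^* * z * (adj u *m M *m u) 0 0.
Proof.
rewrite hadjD hadjZ !mulmxDl !mulmxDr.
rewrite -?scalemxAl -?scalemxAr -?scalemxAl ?scalerA.
set q1 := adj v *m M *m v. set q2 := adj v *m M *m u.
set q3 := adj u *m M *m v. set q4 := adj u *m M *m u.
rewrite !mxE.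
ring.
Qed.

Lemma psd_zero n (M : 'M[C]_n) (v : 'cV[C]_n) : psdmx M -> (adj v *m M *m v) 0 0 = 0 ->
  forall u : 'cV[C]_n, (adj u *m M *m v) 0 0 = 0 /\ (adj v *m M *m u) 0 0 = 0.
Proof.
move=> pM q0 u.
have H : forall z : C, 0 <= z * (adj v *m M *m u) 0 0 + z^* * (adj u *m M *m v) 0 0
     + z^* * z * (adj u *m M *m u) 0 0.
  by move=> z; have := pM (v + z *: u); rewrite quad_expand q0 add0r.
have [a0 b0] := @quadC R _ _ _ (pM u) H.
by [].
Qed.

Lemma hadj_delta_row m n (i : 'I_n) (X : 'M[C]_(n, m)) j : (adj (delta_mx i 0 : 'cV[C]_n) *m X) 0 j = X i j.
Proof. by rewrite hadj_delta -rowE mxE. Qed.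

Lemma psd_ker n (M : 'M[C]_n) (v : 'cV[C]_n) : psdmx M -> (adj v *m M *m v) 0 0 = 0 ->
  M *m v = 0 /\ adj v *m M = 0.
Proof.
move=> pM q0; split; apply/matrixP => i j.
  rewrite (ord1 j) [RHS]mxE -hadj_delta_row mulmxA.
  by have [-> _] := psd_zero _ _ _ pM q0 (delta_mx i 0).
rewrite (ord1 i) [RHS]mxE.
have -> : (adj v *m M) 0 j = (adj v *m M *m (delta_mx j 0 : 'cV[C]_n)) 0 0 by rewrite -colE !mxE.
by have [_ ->] := psd_zero _ _ _ pM q0 (delta_mx j 0).
Qed.
End Psd.

Section CP.
Context {R : realType}.
Local Notation C := R[i].

Lemma cp_conj m n p (Phi : 'M[C]_m -> 'M[C]_n) (L : 'M[C]_(n, p)) :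
  completely_positive Phi -> completely_positive (fun M => adj L *m Phi M *m L).
Proof.
move=> cp k X hX v /=; have := cp k X hX (fun a => L *m v a).
suff -> : \sum_(a < k) \sum_(b < k) (adj (v a) *m (adj L *m Phi (X a b) *m L) *m v b) 0 0 =
  \sum_(a < k) \sum_(b < k) (adj (L *m v a) *m Phi (X a b) *m (L *m v b)) 0 0 by [].
apply: eq_bigr => a _; apply: eq_bigr => b _; by rewrite hadjM !mulmxA.
Qed.

Lemma cp_add m n (Phi1 Phi2 : 'M[C]_m -> 'M[C]_n) :
  completely_positive Phi1 -> completely_positive Phi2 ->
  completely_positive (fun M => Phi1 M + Phi2 M).
Proof.
move=> c1 c2 k X hX v /=.
have -> : \sum_(a < k) \sum_(b < k) (adj (v a) *m (Phi1 (X a b) + Phi2 (X a b)) *m v b) 0 0 =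
  \sum_(a < k) \sum_(b < k) (adj (v a) *m Phi1 (X a b) *m v b) 0 0 +
  \sum_(a < k) \sum_(b < k) (adj (v a) *m Phi2 (X a b) *m v b) 0 0.
  rewrite -big_split /=; apply: eq_bigr => a _; rewrite -big_split /=.
  by apply: eq_bigr => b _; rewrite mulmxDr mulmxDl mxE.
by apply: addr_ge0; [exact: c1 | exact: c2].
Qed.

Lemma cp_scale m n (Phi : 'M[C]_m -> 'M[C]_n) (c : C) : 0 <= c ->
  completely_positive Phi -> completely_positive (fun M => c *: Phi M).
Proof.
move=> c0 cp k X hX v /=.
have -> : \sum_(a < k) \sum_(b < k) (adj (v a) *m (c *: Phi (X a b)) *m v b) 0 0 =
  c * \sum_(a < k) \sum_(b < k) (adj (v a) *m Phi (X a b) *m v b) 0 0.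
  rewrite mulr_sumr; apply: eq_bigr => a _; rewrite mulr_sumr.
  by apply: eq_bigr => b _; rewrite -scalemxAr -scalemxAl mxE.
by apply: mulr_ge0 => //; exact: cp.
Qed.

Lemma cp_zero m n : completely_positive (fun _ : 'M[C]_m => (0 : 'M[C]_n)).
Proof.
move=> k X hX v /=; rewrite big1 // => a _; rewrite big1 // => b _.
by rewrite mulmx0 mul0mx mxE.
Qed.

Lemma cp_sum m n N (F : 'I_N -> 'M[C]_m -> 'M[C]_n) :
  (forall i, completely_positive (F i)) ->
  completely_positive (fun M => \sum_(i < N) F i M).
Proof.
elim: N F => [|N IH] F cF.
  have -> : (fun M => \sum_(i < 0) F i M) = (fun _ => 0) by apply: funext => M; rewrite big_ord0.
  exact: cp_zero.
have -> : (fun M => \sum_(i < N.+1) F i M) =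
  (fun M => \sum_(i < N) F (widen_ord (leqnSn N) i) M + F ord_max M).
  by apply: funext => M; rewrite big_ord_recr.
apply: cp_add; last exact: cF.
exact: (IH (fun i => F (widen_ord (leqnSn N) i))).
Qed.
End CP.

Section Rep.
Context {R : realType} {G : CompactGroup R} {n : nat} (U : URep G n).

Lemma rep_unit' g : adj (U g) *m U g = 1%:M.
Proof. exact: mulmx1C (rep_unitary U g). Qed.

Lemma rep_inv g : U (cg_inv g) = adj (U g).
Proof.
rewrite -[U (cg_inv g)]mulmx1 -(rep_unitary U g) mulmxA -rep_morph.
by rewrite cg_mulVg rep_one mul1mx.
Qed.
End Rep.

Section Sandwich.
Context {R : realType}.
Local Notation C := R[i].

Lemma delta_sandwich (p q : nat) (Y : 'M[C]_q) (j : 'I_p) (k : 'I_q) :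
  delta_mx j k *m Y *m delta_mx k j = Y k k *: (delta_mx j j : 'M[C]_p).
Proof.
have e1 : (delta_mx j k : 'M[C]_(p, q)) = delta_mx j (0 : 'I_1) *m delta_mx 0 k by rewrite mul_delta_mx.
have e2 : (delta_mx k j : 'M[C]_(q, p)) = delta_mx k (0 : 'I_1) *m delta_mx 0 j by rewrite mul_delta_mx.
rewrite e1 e2 -!mulmxA (mulmxA (delta_mx 0 k)) (mulmxA _ _ (delta_mx 0 j)).
rewrite -rowE -colE [col k (row k Y)]mx11_scalar !mxE.
by rewrite mul_scalar_mx -scalemxAr mul_delta_mx.
Qed.

Lemma sum_sandwich (p q : nat) (Y : 'M[C]_q) :
  \sum_(k < q) \sum_(j < p) delta_mx j k *m Y *m delta_mx k j = \tr Y *: (1%:M : 'M[C]_p).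
Proof.
under eq_bigr do under eq_bigr do rewrite delta_sandwich.
under eq_bigr do rewrite -scaler_sumr -mx1_sum_delta.
by rewrite -scaler_suml.
Qed.

Lemma Q_sandwich (p q : nat) (Q X : 'M[C]_q) : adj Q = Q -> Q *m Q = Q ->
  \sum_(k < q) \sum_(j < p) adj (Q *m delta_mx k j) *m X *m (Q *m delta_mx k j)
  = \tr (Q *m X) *: (1%:M : 'M[C]_p).
Proof.
move=> aQ QQ.
under eq_bigr do under eq_bigr do rewrite hadjM hadj_delta aQ !mulmxA -(mulmxA _ Q X) -(mulmxA _ (Q *m X) Q).
rewrite sum_sandwich; congr (_ *: _).
by rewrite mxtrace_mulC mulmxA QQ.
Qed.
End Sandwich.

End PAlg.
Import PAlg.

Module PMain.
Import Order.TTheory GRing.Theory Num.Theory.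
Import numFieldNormedType.Exports.
Local Open Scope ring_scope.

Section Main.
Variables (R : realType) (G : CompactGroup R) (dA dB : nat) (UA : URep G dA) (UB : URep G dB)
  (rho : 'M[R[i]]_dA)
  (sigma : 'M[R[i]]_dB) (Hsigma : is_state sigma) (r : nat) (V : 'M[R[i]]_(dB, r))
  (HV : adj V *m V = 1%:M) (HVS : (V^T == (twirl UB sigma)^T)%MS).

Local Notation Gs := (twirl UB sigma).
Local Notation P := (V *m adj V).
Local Notation Q := (1%:M - V *m adj V).
Definition Ffun (g : cgT G) := UB g *m sigma *m adj (UB g).

Lemma mcF : mcont Ffun.
Proof. apply: mc_mul; [apply: mc_mul; [exact: mc_rep | exact: mc_cst] | apply: mc_adj; exact: mc_rep]. Qed.

Lemma twirl_inv h : UB h *m Gs *m adj (UB h) = Gs.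
Proof.
rewrite twirlE -/Ffun -MI_mull; last exact: mcF.
rewrite -MI_mulr; last by apply: mc_mul; [exact: mc_cst | exact: mcF].
have -> : (fun g => UB h *m Ffun g *m adj (UB h)) = (fun g => Ffun (cg_mul h g)).
  by apply: funext => g; rewrite /Ffun rep_morph hadjM !mulmxA.
exact: MI_transl _ _ _ _ mcF.
Qed.

Lemma twirl_comm h : UB h *m Gs = Gs *m UB h.
Proof. by rewrite -{2}(twirl_inv h) -!mulmxA rep_unit' mulmx1. Qed.

Lemma inv_col h : P *m (UB h *m V) = UB h *m V.
Proof.
case/andP: HVS => HVG HGV.
have : ((UB h *m V)^T <= V^T)%MS.
  rewrite trmx_mul; apply: submx_trans (submxMr _ HVG) _.
  rewrite -trmx_mul twirl_comm trmx_mul; apply: submx_trans HGV.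
  exact: submxMl.
case/submxP => D /(congr1 trmx); rewrite trmxK trmx_mul trmxK => ->.
by rewrite !mulmxA -(mulmxA V) HV mulmx1.
Qed.

Lemma QGs : Q *m Gs = 0.
Proof.
case/andP: HVS => HVG HGV.
case/submxP: HGV => D /(congr1 trmx); rewrite trmxK trmx_mul trmxK => ->.
by rewrite mulmxA mulmxBl mul1mx -mulmxA HV mulmx1 subrr mul0mx.
Qed.

Lemma hadjP : adj P = P.
Proof. by rewrite hadjM hadjK. Qed.
Lemma PP : P *m P = P.
Proof. by rewrite mulmxA -(mulmxA V) HV mulmx1. Qed.
Lemma hadjQ : adj Q = Q.
Proof. by rewrite hadjB hadj1 hadjP. Qed.
Lemma QQ : Q *m Q = Q.
Proof. by rewrite mulmxBl mul1mx mulmxBr mulmx1 PP subrr subr0. Qed.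
Lemma PQ : P *m Q = 0.
Proof. by rewrite mulmxBr mulmx1 PP subrr. Qed.

Lemma inv_col' h : P *m (adj (UB h) *m V) = adj (UB h) *m V.
Proof. by rewrite -rep_inv inv_col. Qed.

Lemma inv_row h : adj V *m UB h *m P = adj V *m UB h.
Proof.
have := congr1 (fun M => adj M) (inv_col' h).
by rewrite !hadjM !hadjK !mulmxA.
Qed.

Lemma commP h : P *m UB h = UB h *m P.
Proof.
have e : P *m UB h = V *m (adj V *m UB h *m P) by rewrite inv_row mulmxA.
by rewrite e !mulmxA -(mulmxA (V *m adj V) (UB h) V) inv_col.
Qed.

Lemma commQ h : adj (UB h) *m Q *m UB h = Q.
Proof.
have u' : adj (UB h) *m UB h = 1%:M by apply: mulmx1C; exact: rep_unitary.
have e1 : adj (UB h) *m (1%:M - P) *m UB h = adj (UB h) *m UB h - adj (UB h) *m P *m UB h.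
  by rewrite mulmxBr mulmx1 mulmxBl.
have e2 : adj (UB h) *m P *m UB h = P by rewrite -mulmxA commP mulmxA u' mul1mx.
by rewrite e1 e2 u'.
Qed.


Lemma supp : sigma *m Q = 0 /\ Q *m sigma = 0.
Proof.
have pS := Hsigma.1.
have key : forall k : 'I_dB, sigma *m (Q *m (delta_mx k 0 : 'cV_dB)) = 0 /\
    adj (Q *m (delta_mx k 0 : 'cV_dB)) *m sigma = 0.
  move=> k; set w := Q *m (delta_mx k 0 : 'cV_dB).
  have awG : adj w *m Gs = 0 by rewrite /w hadjM hadjQ -mulmxA QGs mulmx0.
  have mcw : mcont (fun g => adj w *m Ffun g *m w).
    apply: mc_mul; [apply: mc_mul; [exact: mc_cst | exact: mcF] | exact: mc_cst].
  have E : adj w *m Gs *m w = MI (fun g => adj w *m Ffun g *m w).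
    rewrite twirlE -/Ffun -MI_mull; last exact: mcF.
    by rewrite -MI_mulr //; apply: mc_mul; [exact: mc_cst | exact: mcF].
  have C0 : CI (fun g => (adj w *m Ffun g *m w) 0 0) = 0.
    have := congr1 (fun M : 'M[R[i]]_1 => M 0 0) E; rewrite awG mul0mx /MI mxE => <-.
    by rewrite mxE.
  pose f g := complex.Re ((adj w *m Ffun g *m w) 0 0).
  have cf : continuous f by case: (mcw 0 0).
  have f0 : forall g, 0 <= f g.
    move=> g; have := pS (adj (UB g) *m w).
    rewrite hadjM hadjK /f /Ffun !mulmxA lecE => /andP [_].
    by [].
  have I0 : \int[cg_haar G]_(x in [set: _]) f x = 0 by have := congr1 (@complex.Re R) C0.
  have := int0_pt0 _ cf f0 I0 (cg_one G).
  rewrite /f /Ffun rep_one hadj1 mulmx1 mul1mx => re0.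
  have q0 : (adj w *m sigma *m w) 0 0 = 0.
    move: (pS w) re0; case: ((adj w *m sigma *m w) 0 0) => a b.
    by rewrite lecE /= => /andP [/eqP b0 _] ->; rewrite b0.
  exact: psd_ker pS q0.
split.
  apply/matrixP => i k; have [sw _] := key k.
  have := congr1 (fun M : 'cV[R[i]]_dB => M i 0) sw; rewrite mulmxA -colE !mxE => ->.
  done.
apply/matrixP => k j; have [_ ws] := key k.
have := congr1 (fun M : 'rV[R[i]]_dB => M 0 j) ws.
rewrite hadjM hadjQ -mulmxA hadj_delta_row mxE => ->.
by rewrite !mxE.
Qed.

Lemma sigmaPP : P *m sigma *m P = sigma.
Proof.
have [sQ Qs] := supp.
have eP : P = 1%:M - Q by rewrite opprB addrC subrK.
by rewrite eP mulmxBl mul1mx Qs subr0 mulmxBr mulmx1 sQ subr0.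
Qed.

Lemma r_pos : (0 < r)%N.
Proof.
rewrite lt0n; apply/negP => /eqP r0.
have P0 : P = 0.
  apply/matrixP => i j; rewrite !mxE big1 // => k _.
  by have := ltn_ord k; rewrite {2}r0.
have := Hsigma.2; rewrite -sigmaPP P0 mul0mx mul0mx mxtrace0 => /eqP.
by rewrite eq_sym oner_eq0.
Qed.


Lemma backward :
  (exists Psi : 'M[R[i]]_dA -> 'M[R[i]]_r,
      channel Psi
      /\ covariant UA (fun g => adj V *m UB g *m V) Psi
      /\ V *m Psi rho *m adj V = sigma) ->
  (exists Phi : 'M[R[i]]_dA -> 'M[R[i]]_dB,
      channel Phi /\ covariant UA UB Phi /\ Phi rho = sigma).
Proof.
move=> [Psi [[linPsi [cpPsi tpPsi]] [covPsi ePsi]]].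
exists (fun M => V *m Psi M *m adj V); split; [split; [|split] | split] => //.
- move=> a u v /=.
  by rewrite linPsi mulmxDr mulmxDl -scalemxAr -scalemxAl.
- have -> : (fun M => V *m Psi M *m adj V) = (fun M => adj (adj V) *m Psi M *m adj V).
    by rewrite hadjK.
  exact: cp_conj.
- move=> M /=; by rewrite mxtrace_mulC mulmxA HV mul1mx tpPsi.
- move=> g M /=; rewrite covPsi.
  set W := adj V *m UB g *m V.
  have e1 : V *m W = UB g *m V by rewrite /W !mulmxA -(mulmxA (V *m adj V)) inv_col.
  have -> : V *m (W *m Psi M *m adj W) *m adj V = (V *m W) *m Psi M *m (adj W *m adj V).
    by rewrite !mulmxA.
  by rewrite -hadjM e1 hadjM !mulmxA.
Qed.

Lemma forward :
  (exists Phi : 'M[R[i]]_dA -> 'M[R[i]]_dB,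
      channel Phi /\ covariant UA UB Phi /\ Phi rho = sigma) ->
  (exists Psi : 'M[R[i]]_dA -> 'M[R[i]]_r,
      channel Psi
      /\ covariant UA (fun g => adj V *m UB g *m V) Psi
      /\ V *m Psi rho *m adj V = sigma).
Proof.
move=> [Phi [[linPhi [cpPhi tpPhi]] [covPhi ePhi]]].
have [sQ Qs] := supp.
have r0 : r%:R != 0 :> R[i] by rewrite pnatr_eq0 -lt0n r_pos.
pose c M := \tr (Q *m Phi M) / r%:R.
exists (fun M => adj V *m Phi M *m V + c M *: 1%:M).
split; [split; [|split] | split].
- move=> a u v /=; rewrite /c linPhi.
  rewrite mulmxDr mulmxDl -scalemxAr -scalemxAl mulmxDr -scalemxAr mxtraceD mxtraceZ.
  by rewrite mulrDl -mulrA scalerDl -scalerA scalerDr addrACA.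
- have -> : (fun M => adj V *m Phi M *m V + c M *: 1%:M) =
    (fun M => adj V *m Phi M *m V + r%:R^-1 *: \sum_(k < dB) \sum_(j < r)
        adj (Q *m delta_mx k j) *m Phi M *m (Q *m delta_mx k j)).
    apply: funext => M; rewrite Q_sandwich ?hadjQ ?QQ // scalerA /c mulrC.
    by [].
  apply: cp_add; first exact: cp_conj.
  apply: cp_scale; first by rewrite invr_ge0 ler0n.
  apply: (@cp_sum _ _ _ _ (fun k M => \sum_(j < r) adj (Q *m delta_mx k j) *m Phi M *m (Q *m delta_mx k j))) => k.
  apply: (@cp_sum _ _ _ _ (fun j M => adj (Q *m delta_mx k j) *m Phi M *m (Q *m delta_mx k j))) => j.
  exact: cp_conj.
- move=> M /=; rewrite mxtraceD mxtraceZ mxtrace1 /c divfK //.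
  rewrite mxtrace_mulC mulmxA -mxtraceD -mulmxDl.
  by rewrite addrC subrK mul1mx tpPhi.
- move=> g M /=; rewrite /c covPhi.
  set W := adj V *m UB g *m V.
  have WA : W *m adj V = adj V *m UB g by rewrite /W -mulmxA inv_row.
  have VW : V *m adj W = adj (UB g) *m V.
    by have := congr1 (fun M => adj M) WA; rewrite !hadjM !hadjK.
  have u : UB g *m adj (UB g) = 1%:M := rep_unitary UB g.
  have WW : W *m adj W = 1%:M.
    by rewrite {1}/W -mulmxA VW !mulmxA -(mulmxA _ (UB g)) u mulmx1 HV.
  have tQ : \tr (Q *m (UB g *m Phi M *m adj (UB g))) = \tr (Q *m Phi M).
    by rewrite mulmxA mxtrace_mulC !mulmxA commQ.
  rewrite tQ [W *m (_ + _)]mulmxDr [(_ + _) *m adj W]mulmxDl.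
  have -> : W *m (adj V *m Phi M *m V) *m adj W = (W *m adj V) *m Phi M *m (V *m adj W).
    by rewrite !mulmxA.
  rewrite WA VW -scalemxAr mulmx1 -scalemxAl WW.
  by rewrite !mulmxA.
- rewrite /c ePhi Qs mxtrace0 mul0r scale0r addr0.
  by have := sigmaPP; rewrite !mulmxA => ->.
Qed.

End Main.


End PMain.
Import PMain.

Theorem lemma7 (R : realType) (G : CompactGroup R) (dA dB : nat)
    (UA : URep G dA) (UB : URep G dB)
    (rho : 'M[R[i]]_dA) (sigma : 'M[R[i]]_dB)
    (Hrho : is_state rho) (Hsigma : is_state sigma)
    (r : nat) (V : 'M[R[i]]_(dB, r))
    (HV : adj V *m V = 1%:M)
    (HVS : (V^T == (twirl UB sigma)^T)%MS) :
  (exists Phi : 'M[R[i]]_dA -> 'M[R[i]]_dB,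
      channel Phi /\ covariant UA UB Phi /\ Phi rho = sigma)
  <->
  (exists Psi : 'M[R[i]]_dA -> 'M[R[i]]_r,
      channel Psi
      /\ covariant UA (fun g => adj V *m UB g *m V) Psi
      /\ V *m Psi rho *m adj V = sigma).
Proof.
split.
  exact: (@forward R G dA dB UA UB rho sigma Hsigma r V HV HVS).
exact: (@backward R G dA dB UA UB rho sigma r V HV HVS).
Qed.
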